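(* Let $(Z, S(1), S(0), Y(1), Y(0), \mathbf{X})$ be random variables with $Z\in\{0,1\}$, $S(z)\in\{0,1\}$, $Y(z)$ real-valued, $\mathbf{X}$ a covariate vector, observed $S=S(Z)$, and assume Randomization: $Z \perp\!\!\!\perp \{S(1),S(0),Y(1),Y(0),\mathbf{X}\}$. Assume Monotonicity ($S(1)\ge S(0)$ a.s.) and General Principal Ignorability ($Y(z)\perp\!\!\!\perp U\mid \mathbf{X}$ for $z=0,1$). Then $Y(1)\perp\!\!\!\perp U\mid\{Z=1,S=1,e_{1,u}(\mathbf{X})\}$ for $u=s\bar{s}$ and $u=ss$, and $Y(0)\perp\!\!\!\perp U\mid\{Z=0,S=0,e_{0,u}(\mathbf{X})\}$ for $u=s\bar{s}$ and $u=\bar{s}\bar{s}$.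
   Context: The principal stratum is $U=(S(1),S(0))$, whose values $(1,1),(1,0),(0,1),(0,0)$ are labelled $ss, s\bar{s}, \bar{s}s, \bar{s}\bar{s}$. Principal scores: $e_u(\mathbf{X}) = \Pr(U=u\mid \mathbf{X})$. Define $e_{1,s\bar{s}}(\mathbf{X}) = e_{s\bar{s}}(\mathbf{X})/\{e_{s\bar{s}}(\mathbf{X})+e_{ss}(\mathbf{X})\}$, $e_{1,ss}(\mathbf{X}) = e_{ss}(\mathbf{X})/\{e_{s\bar{s}}(\mathbf{X})+e_{ss}(\mathbf{X})\}$, $e_{0,s\bar{s}}(\mathbf{X}) = e_{s\bar{s}}(\mathbf{X})/\{e_{s\bar{s}}(\mathbf{X})+e_{\bar{s}\bar{s}}(\mathbf{X})\}$, $e_{0,\bar{s}\bar{s}}(\mathbf{X}) = e_{\bar{s}\bar{s}}(\mathbf{X})/\{e_{s\bar{s}}(\mathbf{X})+e_{\bar{s}\bar{s}}(\mathbf{X})\}$. Conditioning events and denominators are assumed positive. *)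

(* Defs.v *)
From HB Require Import structures.
From mathcomp Require Import all_boot all_order all_algebra.
From mathcomp Require Import all_classical all_reals all_analysis.
Set Implicit Arguments. Unset Strict Implicit. Unset Printing Implicit Defensive.
Import Order.TTheory GRing.Theory Num.Theory.
Local Open Scope classical_set_scope.
Local Open Scope ring_scope.

(* Principal strata U = (S(1), S(0)) : bool * bool. *)
Definition ss    : bool * bool := (true, true).
Definition ssbar : bool * bool := (true, false).
Definition sbars : bool * bool := (false, true).
Definition sbarsbar : bool * bool := (false, false).

(* Conditional independence of Y and U given (the event A and) the random
   variable W, for U taking values in a finite (discrete) type K:
   for every Borel set B there is a version h(W) of Pr(Y in B | W, A) such that
   Pr(Y in B | U, W, A) = h(W) a.s. on A, i.e.
   P(A /\ Y in B /\ U = u /\ W in C) = \int_{A /\ U = u /\ W in C} h(W) dP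
   for all u and all measurable C.  (Standard characterization of
   conditional independence: the conditional law of Y given (U,W) depends on W only.) *)
Definition cond_indep {d dW} {Omega : measurableType d} {R : realType}
  {TW : measurableType dW} {K : Type}
  (P : probability Omega R) (A : set Omega) (Y : Omega -> R) (U : Omega -> K)
  (W : Omega -> TW) : Prop :=
  forall B : set R, measurable B ->
    exists h : TW -> R,
      [/\ measurable_fun setT h,
          (forall w, 0 <= h w <= 1) &
          forall (u : K) (C : set TW), measurable C ->
            P (A `&` Y @^-1` B `&` U @^-1` [set u] `&` W @^-1` C) =
            (\int[P]_(x in A `&` U @^-1` [set u] `&` W @^-1` C) (h (W x))%:E)%E].

Definition principal_scores {d dX} {Omega : measurableType d} {R : realType}
  {TX : measurableType dX} (P : probability Omega R)
  (U : Omega -> bool * bool) (X : Omega -> TX) (e : bool * bool -> TX -> R) : Prop :=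
  forall u : bool * bool,
    [/\ measurable_fun setT (e u),
        (forall x, 0 <= e u x <= 1) &
        forall C : set TX, measurable C ->
          P (U @^-1` [set u] `&` X @^-1` C) =
          (\int[P]_(w in X @^-1` C) (e u (X w))%:E)%E].

Definition e1 {TX : Type} {R : realType} (e : bool * bool -> TX -> R) (u : bool * bool)
  (x : TX) : R := e u x / (e ssbar x + e ss x).
Definition e0 {TX : Type} {R : realType} (e : bool * bool -> TX -> R) (u : bool * bool)
  (x : TX) : R := e u x / (e ssbar x + e sbarsbar x).

(* Main.v *)
Require Import Defs.
From HB Require Import structures.
From mathcomp Require Import all_boot all_order all_algebra.
From mathcomp Require Import all_classical all_reals all_analysis.
From mathcomp Require Import measurable_realfun.
Import Order.TTheory GRing.Theory Num.Theory.
Local Open Scope classical_set_scope.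
Local Open Scope ring_scope.
Set Implicit Arguments. Unset Strict Implicit. Unset Printing Implicit Defensive.
Import HBNNSimple.

Section fmr.
Local Open Scope ereal_scope.
Context d d' (T : measurableType d) (T' : measurableType d') (R : realType).
Variables (P : probability T R) (D : set T) (W : T -> T').
Hypotheses (mD : measurable D) (mW : measurable_fun setT W).

Definition fmr (mD' : measurable D) (mW' : measurable_fun setT W) := fun C => P (W @^-1` C `&` D).
Local Notation fmrL := (fmr mD mW).

Let mpre C : measurable C -> measurable (W @^-1` C `&` D).
Proof. by move=> mC; apply: measurableI => //; rewrite -[X in measurable X]setTI; exact: mW. Qed.

Let fmr0 : fmrL set0 = 0.
Proof. by rewrite /fmrL /fmr preimage_set0 set0I measure0. Qed.

Let fmr_ge0 A : 0 <= fmrL A.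
Proof. exact: measure_ge0. Qed.

Let fmr_sigma_additive : semi_sigma_additive fmrL.
Proof.
move=> F mF tF mUF; rewrite /fmrL /fmr preimage_bigcup setI_bigcupl.
apply: measure_semi_sigma_additive.
- by move=> n; exact: mpre.
- apply/trivIsetP => /= i j _ _ ij; rewrite setIACA setIid -preimage_setI.
  by move/trivIsetP : tF => /(_ _ _ _ _ ij) ->//; rewrite preimage_set0 set0I.
- by rewrite -setI_bigcupl -preimage_bigcup; exact: mpre.
Qed.

HB.instance Definition _ := isMeasure.Build _ _ _ fmrL fmr0 fmr_ge0 fmr_sigma_additive.

Let fmr_fin : fin_num_fun fmrL.
Proof.
move=> A mA; rewrite ge0_fin_numE ?measure_ge0//.
rewrite (le_lt_trans (probability_le1 P _)) ?ltry//; exact: mpre.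
Qed.

HB.instance Definition _ := Measure_isFinite.Build _ _ _ fmrL fmr_fin.

End fmr.
Arguments fmr {d d' T T' R} P {D W}.

Section dens.
Local Open Scope ereal_scope.
Context d d' (T : measurableType d) (T' : measurableType d') (R : realType).

Lemma dens (n : {measure set T' -> \bar R}) (m : {measure set T -> \bar R})
 (X : T -> T') (mX : measurable_fun setT X) (D : set T) (mD : measurable D)
 (phi : T' -> \bar R) (mphi : measurable_fun setT phi)
 (phi0 : forall y, 0 <= phi y) (phifin : forall y, phi y \is a fin_num) :
 (forall E, measurable E -> n E = \int[m]_(x in D `&` X @^-1` E) phi (X x)) ->
 forall (psi : T' -> \bar R) (E : set T'), measurable E -> measurable_fun E psi ->
 (forall y, E y -> 0 <= psi y) ->
 \int[n]_(y in E) psi y = \int[m]_(x in D `&` X @^-1` E) (psi (X x) * phi (X x)).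
Proof.
move=> Hn psi E mE mpsi psi0.
have mXE F : measurable F -> measurable (D `&` X @^-1` F).
  by move=> mF; apply: measurableI => //; rewrite -[X in measurable X]setTI; exact: mX.
pose h := nnsfun_approx mE mpsi.
have -> : \int[n]_(x in E) psi x =
    lim (\int[n]_(x in E) (EFin \o h k) x @[k --> \oo]).
  have fE x : E x -> psi x = lim ((EFin \o h k) x @[k --> \oo]).
    by move=> Ex; apply/esym/cvg_lim => //; exact: cvg_nnsfun_approx.
  under eq_integral => x /[!inE] /fE -> //.
  apply: monotone_convergence => //.
  - move=> k; apply/measurable_EFinP.
    by apply: (measurable_funS measurableT) => //; exact/measurable_funP.
  - by move=> k x Ex //=; rewrite lee_fin.
  - by move=> x Ex a b ab; rewrite lee_fin; exact/lefP/nd_nnsfun_approx.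
have -> : \int[m]_(x in D `&` X @^-1` E) (psi (X x) * phi (X x)) =
    lim (\int[m]_(x in D `&` X @^-1` E) ((EFin \o h k) (X x) * phi (X x)) @[k --> \oo]).
  have fg x : (D `&` X @^-1` E) x -> psi (X x) * phi (X x) =
      lim (((EFin \o h k) (X x) * phi (X x)) @[k --> \oo]).
    by move=> [_ Ex]; apply/esym/cvg_lim => //; apply: cvgeZr;
      [exact: phifin|exact: cvg_nnsfun_approx].
  under eq_integral => x /[!inE] /fg -> //.
  apply: monotone_convergence => [|k| |]; first exact: mXE.
  - apply/emeasurable_funM; apply/measurable_funTS.
      by apply/measurable_EFinP; apply: measurableT_comp => //; exact/measurable_funP.
    exact: measurableT_comp.
  - by move=> x Ex /=; rewrite mule_ge0 ?lee_fin.
  - by move=> x Ex a b ab/=; rewrite lee_wpmul2r ?lee_fin//; exact/lefP/nd_nnsfun_approx.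
suff suf k : \int[n]_(x in E) (EFin \o h k) x =
    \int[m]_(x in D `&` X @^-1` E) ((EFin \o h k) (X x) * phi (X x)).
  by under eq_fun do rewrite suf.
transitivity (\int[n]_(x in E)
   (\sum_(y \in range (h k)) (y * \1_(h k @^-1` [set y]) x)%:E)).
  by apply: eq_integral => t tE; rewrite /= fimfunE -fsumEFin.
have indich r : measurable_fun E (fun x => (r * \1_(h k @^-1` [set r]) x)%:E).
  by apply: (measurable_comp measurableT) => //; exact: measurable_funM.
rewrite ge0_integral_fsum//; last by move=> y x Ex; exact: nnfun_muleindic_ge0.
transitivity (\int[m]_(x in D `&` X @^-1` E) (\sum_(y \in range (h k))
    (y * \1_(h k @^-1` [set y]) (X x))%:E * phi (X x))); last first.
  under eq_integral => x xE.
    rewrite -ge0_mule_fsuml => [|y]; last exact: nnfun_muleindic_ge0.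
    rewrite fsumEFin // -(fimfunE _ (X x)); over.
  by [].
rewrite ge0_integral_fsum//; last 2 first.
  - move=> y; apply: emeasurable_funM.
      apply/measurable_funTS/measurable_EFinP; apply: measurable_funM => //.
      apply: measurableT_comp => //.
    exact/measurable_funTS/measurableT_comp.
  - by move=> y x Ex; rewrite mule_ge0 ?nnfun_muleindic_ge0.
apply: eq_fsbigr => r rhk.
have r0 : (0 <= r)%R by move: rhk; rewrite inE => -[t _ <-]; exact: fun_ge0.
rewrite integralZl_indic_nnsfun// integral_indic//.
under eq_integral do rewrite EFinM -muleA.
rewrite ge0_integralZl//; last by move=> x _; rewrite mule_ge0 ?lee_fin.
congr (_ * _).
rewrite (eq_integral ((phi \o X) \_ (X @^-1` (h k @^-1` [set r])))); last first.
  by move=> x xE; rewrite epatch_indic /= muleC.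
rewrite -integral_mkcondr Hn; last by apply: measurableI.
congr (integral _ _ _); apply/seteqP; split=> x /=; tauto.
- exact: mXE.
- apply: emeasurable_funM; last exact/measurable_funTS/measurableT_comp.
  apply/measurable_funTS/measurable_EFinP; apply: measurableT_comp => //.
- exact: mXE.
Qed.

End dens.

Section cor.
Local Open Scope ereal_scope.
Context d d' (T : measurableType d) (T' : measurableType d') (R : realType).
Variable (P : probability T R).

Lemma fmrE (D : set T) (W : T -> T') (mD : measurable D) (mW : measurable_fun setT W)
  (psi : T' -> \bar R) (E : set T') : measurable E -> measurable_fun E psi ->
  (forall y, E y -> 0 <= psi y) ->
  \int[fmr P mD mW]_(y in E) psi y = \int[P]_(x in D `&` W @^-1` E) psi (W x).
Proof.
move=> mE mpsi psi0.
rewrite (@dens _ _ _ _ _ _ P W mW D mD (cst 1)) //.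
- by apply: eq_integral => x _; rewrite /= mule1.
move=> F mF; rewrite integral_cst /= ?mul1e; last first.
  by apply: measurableI => //; rewrite -[X in measurable X]setTI; exact: mW.
by rewrite /fmr setIC.
Qed.

Lemma transfer (X : T -> T') (mX : measurable_fun setT X) (D1 D2 : set T)
  (mD1 : measurable D1) (mD2 : measurable D2)
  (phi : T' -> \bar R) (mphi : measurable_fun setT phi)
  (phi0 : forall y, 0 <= phi y) (phifin : forall y, phi y \is a fin_num) :
  (forall E, measurable E -> P (D1 `&` X @^-1` E) = \int[P]_(x in D2 `&` X @^-1` E) phi (X x)) ->
  forall (psi : T' -> \bar R) (E : set T'), measurable E -> measurable_fun E psi ->
  (forall y, E y -> 0 <= psi y) ->
  \int[P]_(x in D1 `&` X @^-1` E) psi (X x) =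
  \int[P]_(x in D2 `&` X @^-1` E) (psi (X x) * phi (X x)).
Proof.
move=> H psi E mE mpsi psi0.
rewrite -(fmrE mD1 mX) //.
apply: dens => // F mF; rewrite -H //.
by rewrite /fmr setIC.
Qed.

End cor.

Section main.
Context d dX (Omega : measurableType d) (R : realType) (TX : measurableType dX)
  (P : probability Omega R).
Variables (Z : Omega -> bool) (U : Omega -> bool * bool) (Y : Omega -> R)
  (X : Omega -> TX) (e : bool * bool -> TX -> R) (z : bool) (a b : bool * bool)
  (A : set Omega).
Hypotheses (mZ : measurable (Z @^-1` [set z]))
  (mU : forall u, measurable (U @^-1` [set u]))
  (mY : measurable_fun setT Y) (mX : measurable_fun setT X) (ab : a != b)
  (spos : forall x, 0 < e a x + e b x) (PS : principal_scores P U X e)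
  (CI : cond_indep P setT Y U X)
  (IND : forall u B E, measurable B -> measurable E ->
     P (Z @^-1` [set z] `&` (Y @^-1` B `&` U @^-1` [set u] `&` X @^-1` E)) =
     (P (Z @^-1` [set z]) * P (Y @^-1` B `&` U @^-1` [set u] `&` X @^-1` E))%E)
  (Aab : forall w, U w = a \/ U w = b -> (A w <-> Z w = z))
  (Aout : forall w, A w -> U w = a \/ U w = b).

Let mpre (F : set TX) : measurable F -> measurable (X @^-1` F).
Proof. by move=> mF; rewrite -[X in measurable X]setTI; exact: mX. Qed.

Let me0 u : measurable_fun setT (e u). Proof. by case: (PS u). Qed.
Let e01 u x : 0 <= e u x <= 1. Proof. by case: (PS u) => _ H _; exact: H. Qed.
Let e0 u x : 0 <= e u x. Proof. by case/andP: (e01 u x). Qed.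

Definition sab x := e a x + e b x.
Let ms : measurable_fun setT sab. Proof. exact: measurable_funD. Qed.

Lemma main u0 : u0 = a \/ u0 = b ->
  cond_indep P A Y U (fun w => e u0 (X w) / (e a (X w) + e b (X w))).
Proof.
move=> hu0 B mB.
pose w x := e u0 x / sab x.
have mw : measurable_fun setT w.
  rewrite (_ : w = (fun x => e u0 x * (sab x) `^ (-1))); last first.
    by apply/funext => x; rewrite /w powR_inv1 // /sab ltW.
  exact: (measurable_funM (me0 u0) (measurableT_comp (@measurable_powR R (-1)) ms)).
have mW : measurable_fun setT (fun x => w (X x)) := measurableT_comp mw mX.
have mWpre F : measurable F -> measurable ((fun x => w (X x)) @^-1` F).
  by move=> mF; rewrite -[X in measurable X]setTI; exact: mW.
have [g [mg g01 Hg]] := CI mB.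
have mYB : measurable (Y @^-1` B) by rewrite -[X in measurable X]setTI; exact: mY.
have mYNB : measurable (Y @^-1` (~` B)).
  by rewrite -[X in measurable X]setTI; apply: mY => //; exact: measurableC.
pose Uab := U @^-1` [set a] `|` U @^-1` [set b].
have mUab : measurable Uab by exact: measurableU.
pose DY := Y @^-1` B `&` Uab.
pose DN := Y @^-1` (~` B) `&` Uab.
have mDY : measurable DY by exact: measurableI.
have mDN : measurable DN by exact: measurableI.
pose mu : {finite_measure set R -> \bar R} := fmr P mUab mW.
pose nu : {finite_measure set R -> \bar R} := fmr P mDY mW.
pose rho : {finite_measure set R -> \bar R} := fmr P mDN mW.
have dom (D' : set Omega) (mD' : measurable D') : D' `<=` Uab -> fmr P mD' mW `<< mu.
  move=> sub N /= HN A0 mA0 A0N; apply/eqP; rewrite eq_le measure_ge0 andbT.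
  rewrite -(HN A0 mA0 A0N) /= /fmr; apply: le_measure; rewrite ?inE.
  - by apply: measurableI => //; exact: mWpre.
  - by apply: measurableI => //; exact: mWpre.
  - by move=> x [? ?]; split => //; exact: sub.
have numu : nu `<< mu by apply: dom => x [].
have rhomu : rho `<< mu by apply: dom => x [].
pose p := Radon_Nikodym_SigmaFinite.f nu mu.
pose q := Radon_Nikodym_SigmaFinite.f rho mu.
have p0 t : (0 <= p t)%E by exact: Radon_Nikodym_SigmaFinite.f_ge0.
have q0 t : (0 <= q t)%E by exact: Radon_Nikodym_SigmaFinite.f_ge0.
have pfin t : p t \is a fin_num by exact: Radon_Nikodym_SigmaFinite.f_fin_num.
have pint : mu.-integrable setT p by exact: Radon_Nikodym_SigmaFinite.f_integrable.
have qint : mu.-integrable setT q by exact: Radon_Nikodym_SigmaFinite.f_integrable.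
have mp : measurable_fun setT p := measurable_int _ pint.
have pE F : measurable F -> nu F = (\int[mu]_(x in F) p x)%E.
  exact: Radon_Nikodym_SigmaFinite.f_integral.
have qE F : measurable F -> rho F = (\int[mu]_(x in F) q x)%E.
  exact: Radon_Nikodym_SigmaFinite.f_integral.
have pq1 : ae_eq mu setT (p \+ q)%E (cst 1%E).
  apply: integral_ae_eq => //; first exact: integrableD.
  move=> F _ mF; rewrite ge0_integralD //; last 2 first.
  - exact: measurable_funTS.
  - exact: measurable_funTS (measurable_int _ qint).
  rewrite -pE // -qE // integral_cst //= mul1e /fmr -measureU //.
  - congr (P _); apply/seteqP; split => x /=.
      by move=> [[? [? ?]]|[? [? ?]]].
    move=> [? ?]; case: (pselect (B (Y x))) => ?; [left|right]; by [].
  - exact: measurableI (mWpre _ mF) mDY.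
  - exact: measurableI (mWpre _ mF) mDN.
  - by apply/seteqP; split => x // [[_ [? _]] [_ [? _]]].
pose h t := fine (Order.min (p t) 1%E).
have mh : measurable_fun setT h.
  apply: measurableT_comp; first exact: fine_measurable.
  exact: measurable_mine.
have h01 t : 0 <= h t <= 1.
  rewrite /h; set r := fine (p t).
  have pE' : p t = r%:E by rewrite /r fineK.
  have f0 : 0 <= r by rewrite -lee_fin -pE'.
  rewrite pE' -EFin_min /=; apply/andP; split; first by rewrite le_min f0 ler01.
  by rewrite ge_min lexx orbT.
have hp : {ae mu, forall t, setT t -> (h t)%:E = p t}.
  apply: filterS pq1 => t /[apply] /= pq.
  have ple : (p t <= 1)%E by rewrite -pq leeDl.
  by rewrite /h min_l // fineK.
exists h; split => // u' C mC.
pose E0 := w @^-1` C.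
have mE0 : measurable E0 by rewrite /E0 -[X in measurable X]setTI; exact: mw.
case: (pselect (u' = a \/ u' = b)) => hu'; last first.
  have H0 S1 S2 : A `&` S1 `&` U @^-1` [set u'] `&` S2 = set0.
    apply/seteqP; split => // x [[[Ax _] Ux] _]; apply: hu'.
    by case: (Aout Ax) => H; [left|right]; rewrite -Ux.
  have H1 S2 : A `&` U @^-1` [set u'] `&` S2 = set0.
    apply/seteqP; split => // x [[Ax Ux] _]; apply: hu'.
    by case: (Aout Ax) => H; [left|right]; rewrite -Ux.
  by rewrite H0 H1 measure0 integral_set0.
have H0 : A `&` Y @^-1` B `&` U @^-1` [set u'] `&`
    (fun w0 => e u0 (X w0) / (e a (X w0) + e b (X w0))) @^-1` C =
    Z @^-1` [set z] `&` (Y @^-1` B `&` U @^-1` [set u'] `&` X @^-1` E0).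
  apply/seteqP; split => x /=.
    move=> [[[Ax YB] Ux] Cx]; split => //; have hx : U x = a \/ U x = b by rewrite Ux.
    exact: ((Aab hx).1 Ax).
  move=> [Zx [[YB Ux] Cx]]; split => //; split => //; split => //.
  have hx : U x = a \/ U x = b by rewrite Ux.
  exact: ((Aab hx).2 Zx).
have H1 : A `&` U @^-1` [set u'] `&`
    (fun w0 => e u0 (X w0) / (e a (X w0) + e b (X w0))) @^-1` C =
    (Z @^-1` [set z] `&` U @^-1` [set u']) `&` X @^-1` E0.
  apply/seteqP; split => x /=.
    move=> [[Ax Ux] Cx]; split => //; split => //; have hx : U x = a \/ U x = b by rewrite Ux.
    exact: ((Aab hx).1 Ax).
  move=> [[Zx Ux] Cx]; split => //; split => //.
  have hx : U x = a \/ U x = b by rewrite Ux.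
  exact: ((Aab hx).2 Zx).
rewrite H0 H1 IND //.
set c := P (Z @^-1` [set z]).
have c0 : (0 <= c)%E by exact: measure_ge0.
have cfin : c \is a fin_num by rewrite ge0_fin_numE // (le_lt_trans (probability_le1 _ _)) // ltry.
rewrite (@transfer _ _ _ _ _ P X mX _ (U @^-1` [set u']) _ (mU u') (cst c) _ _ _ _ (fun y => (h (w y))%:E) E0) //; [
| exact: measurableI
| move=> F mF; rewrite integral_cst /=; [
  have := IND u' (@measurableT _ R) mF; rewrite preimage_setT setTI setIA => -> //
  | exact: measurableI (mU u') (mpre mF)]
| by apply/measurable_EFinP; apply: measurable_funTS; exact: measurableT_comp mh mw
| by move=> y _; rewrite lee_fin; case/andP: (h01 (w y))].
rewrite ge0_integralZr //; last by move=> x _; rewrite lee_fin; case/andP: (h01 (w (X x))).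
rewrite muleC; congr (_ * _)%E.
pose k t : R := `|(if u' == u0 then t else 1 - t)|.
have mk : measurable_fun setT k.
  apply: measurableT_comp; first exact: normr_measurable.
  case: (u' == u0); first exact: measurable_id.
  exact: measurable_funB.
have k0 t : 0 <= k t by exact: normr_ge0.
have sab0 x : sab x != 0 by apply: lt0r_neq0; exact: spos.
have ek x : e u' x = k (w x) * sab x.
  rewrite /k /w; case: ifPn => [/eqP ->|neq].
    rewrite ger0_norm; first by rewrite mulfVK.
    by apply: divr_ge0 => //; exact: ltW (spos x).
  have sE : sab x = e u' x + e u0 x.
    rewrite /sab; case: hu' => Hu'; case: hu0 => Hu0; rewrite Hu' Hu0 in neq *;
      [by rewrite eqxx in neq | by [] | by rewrite addrC | by rewrite eqxx in neq].
  rewrite (_ : 1 - e u0 x / sab x = e u' x / sab x).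
    rewrite ger0_norm; first by rewrite mulfVK.
    by apply: divr_ge0 => //; exact: ltW (spos x).
  by apply: (mulIf (sab0 x)); rewrite mulrBl !mulfVK // mul1r {1}sE addrK.
have Hps u E : measurable E -> P (U @^-1` [set u] `&` X @^-1` E) =
    (\int[P]_(x in setT `&` X @^-1` E) (EFin \o e u) (X x))%E.
  by move=> mE; case: (PS u) => _ _ H; rewrite H // setTI.
have Hs E : measurable E -> P (Uab `&` X @^-1` E) =
    (\int[P]_(x in setT `&` X @^-1` E) (EFin \o sab) (X x))%E.
  move=> mE; rewrite setIUl measureU //; last 3 first.
  - exact: measurableI (mU a) (mpre mE).
  - exact: measurableI (mU b) (mpre mE).
  - apply/seteqP; split => // x [[/= xa _] [/= xb _]].
    by move/negP: ab; apply; rewrite -xa -xb.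
  transitivity ((\int[P]_(x in setT `&` X @^-1` E) (EFin \o e a) (X x)) +
    (\int[P]_(x in setT `&` X @^-1` E) (EFin \o e b) (X x)))%E.
    by congr (_ + _)%E; [exact: Hps | exact: Hps].
  rewrite -ge0_integralD //; last first.
  all: try (by move=> x _; rewrite /= lee_fin).
  all: try (by apply/measurable_EFinP; apply: measurable_funTS; exact: measurableT_comp).
  all: try (exact: mpre).
  by rewrite setTI; exact: mpre.
have Hgab E : measurable E -> P (DY `&` X @^-1` E) =
    (\int[P]_(x in Uab `&` X @^-1` E) (EFin \o g) (X x))%E.
  move=> mE.
  have -> : DY `&` X @^-1` E = (Y @^-1` B `&` U @^-1` [set a] `&` X @^-1` E) `|`
      (Y @^-1` B `&` U @^-1` [set b] `&` X @^-1` E).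
    by rewrite /DY /Uab; apply/seteqP; split => x /=; tauto.
  rewrite measureU //; last 3 first.
  - by apply: measurableI => //; [exact: measurableI|exact: mpre].
  - by apply: measurableI => //; [exact: measurableI|exact: mpre].
  - apply/seteqP; split => // x [[[_ /= xa] _] [[_ /= xb] _]].
    by move/negP: ab; apply; rewrite -xa -xb.
  transitivity ((\int[P]_(x in U @^-1` [set a] `&` X @^-1` E) (EFin \o g) (X x)) +
    (\int[P]_(x in U @^-1` [set b] `&` X @^-1` E) (EFin \o g) (X x)))%E.
    congr (_ + _)%E.
      by have := Hg a E mE; rewrite !setTI => Ha; exact: Ha.
    by have := Hg b E mE; rewrite !setTI => Hb; exact: Hb.
  rewrite /Uab setIUl ge0_integral_setU //.
  - exact: measurableI (mU a) (mpre mE).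
  - exact: measurableI (mU b) (mpre mE).
  - by apply/measurable_EFinP; apply: measurable_funTS; exact: measurableT_comp.
  - by move=> x _; rewrite /= lee_fin; case/andP: (g01 (X x)).
  - apply/disj_setPS => x [[/= xa _] [/= xb _]].
    by move/negP: ab; apply; rewrite -xa -xb.
have mXE0 := mpre mE0.
have mEw (f : R -> R) : measurable_fun setT f -> measurable_fun E0 (fun y => (f (w y))%:E).
  by move=> mf; apply/measurable_EFinP; apply: measurable_funTS; exact: measurableT_comp mf mw.
have mEg : measurable_fun E0 (fun y => (g y)%:E).
  by apply/measurable_EFinP; exact: measurable_funTS.
have g0 y : 0 <= g y by case/andP: (g01 y).
have h0 y : 0 <= h y by case/andP: (h01 y).
have sab0' y : 0 <= sab y by exact: ltW (spos y).
transitivity (\int[P]_(x in U @^-1` [set u'] `&` X @^-1` E0) (EFin \o g) (X x))%E.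
  by have := Hg u' E0 mE0; rewrite !setTI => H; exact: H.
rewrite (@transfer _ _ _ _ _ P X mX _ _ (mU u') measurableT (EFin \o e u') _ _ _ _
  (EFin \o g) E0) //; last first.
all: try (by move=> F mF; exact: Hps).
all: try (by apply/measurable_EFinP).
all: try (by move=> y; rewrite /= lee_fin).
all: try (by move=> y _; rewrite /= lee_fin).
all: try (exact: measurableI).
rewrite (@transfer _ _ _ _ _ P X mX _ _ (mU u') measurableT (EFin \o e u') _ _ _ _
  (fun y => (h (w y))%:E) E0) //; last first.
all: try (by move=> F mF; exact: Hps).
all: try (by apply/measurable_EFinP).
all: try (by move=> y; rewrite /= lee_fin).
all: try (by move=> y _; rewrite /= lee_fin).
all: try (exact: measurableI).
all: try (exact: mEw).
transitivity (\int[mu]_(y in C) ((k y)%:E * (h y)%:E))%E.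
  transitivity (\int[P]_(x in setT `&` X @^-1` E0)
      ((fun y => (g y * k (w y))%:E) (X x) * (EFin \o sab) (X x)))%E.
    by apply: eq_integral => x _; rewrite /= ek -!EFinM mulrA.
  rewrite -(@transfer _ _ _ _ _ P X mX _ _ mUab measurableT (EFin \o sab) _ _ _ _
    (fun y => (g y * k (w y))%:E) E0) //; last first.
  all: try (by move=> F mF; exact: Hs).
  all: try (by apply/measurable_EFinP).
  all: try (by move=> y; rewrite /= lee_fin).
  all: try (by move=> y _; rewrite /= lee_fin mulr_ge0).
  all: try (exact: measurableI).
  all: try (by apply/measurable_EFinP; apply: measurable_funTS; apply: measurable_funM => //;
      exact: measurableT_comp mk mw).
  transitivity (\int[P]_(x in Uab `&` X @^-1` E0)
      ((fun y => (k (w y))%:E) (X x) * (EFin \o g) (X x)))%E.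
    by apply: eq_integral => x _; rewrite /= mulrC EFinM.
  rewrite -(@transfer _ _ _ _ _ P X mX _ _ mDY mUab (EFin \o g) _ _ _ _
    (fun y => (k (w y))%:E) E0) //; last first.
  all: try (by move=> F mF; exact: Hgab).
  all: try (by apply/measurable_EFinP).
  all: try (by move=> y; rewrite /= lee_fin).
  all: try (by move=> y _; rewrite /= lee_fin).
  all: try (exact: measurableI).
  all: try (exact: mEw).
  transitivity (\int[nu]_(y in C) (k y)%:E)%E.
    rewrite /nu (@fmrE _ _ _ _ _ P _ _ mDY mW (fun y => (k y)%:E) C mC) //.
      by apply/measurable_EFinP; exact: measurable_funTS.
    by move=> y _; rewrite lee_fin.
  rewrite (@dens _ _ _ _ _ nu mu id (@measurable_id _ _ setT) setT measurableT p mp p0 pfin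
    _ (fun y => (k y)%:E) C mC) //; last first.
  all: try (by move=> F mF; rewrite setTI; exact: pE).
  all: try (by apply/measurable_EFinP; exact: measurable_funTS).
  all: try (by move=> y _; rewrite lee_fin).
  rewrite setTI; apply: ae_eq_integral => //.
  - apply: emeasurable_funM; last exact: measurable_funTS.
    by apply/measurable_EFinP; exact: measurable_funTS.
  - apply: emeasurable_funM; apply/measurable_EFinP; exact: measurable_funTS.
  - by apply: filterS hp => t H Ct; rewrite /= -H.
transitivity (\int[P]_(x in Uab `&` (fun x => w (X x)) @^-1` C)
    ((k (w (X x)))%:E * (h (w (X x)))%:E))%E.
  rewrite (@fmrE _ _ _ _ _ P _ _ mUab mW (fun y => ((k y)%:E * (h y)%:E)%E) C mC) //.
    by apply: emeasurable_funM; apply/measurable_EFinP; exact: measurable_funTS.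
  by move=> y _; rewrite -EFinM lee_fin mulr_ge0.
rewrite (@transfer _ _ _ _ _ P X mX _ _ mUab measurableT (EFin \o sab) _ _ _ _
  (fun y => ((k (w y))%:E * (h (w y))%:E)%E) E0) //; last first.
all: try (by move=> F mF; exact: Hs).
all: try (by apply/measurable_EFinP).
all: try (by move=> y; rewrite /= lee_fin).
all: try (by move=> y _; rewrite -EFinM lee_fin mulr_ge0).
all: try (exact: measurableI).
all: try (by apply: emeasurable_funM; exact: mEw).
by apply: eq_integral => x _; rewrite /= ek -!EFinM mulrA [k _ * h _]mulrC.
all: exact: measurableI (mU u') (mpre mE0).
Qed.

End main.

Unset Implicit Arguments. Set Strict Implicit. Set Printing Implicit Defensive.

Lemma mbool (b : bool) : measurable [set b].
Proof. by []. Qed.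
Lemma mbool2 (u : bool * bool) : measurable [set u].
Proof.
rewrite (_ : [set u] = fst @^-1` [set u.1] `&` snd @^-1` [set u.2]).
  apply: measurableI.
  - by rewrite -[X in measurable X]setTI; exact: measurable_fst.
  - by rewrite -[X in measurable X]setTI; exact: measurable_snd.
by apply/seteqP; split => [[x y] /= <- //|[x y] /= [-> ->]]; case: u.
Qed.
Theorem lemmaA8 (d dX : measure_display) (Omega : measurableType d) (R : realType)
  (TX : measurableType dX) (P : probability Omega R)
  (Z S1 S0 : Omega -> bool) (Y1 Y0 : Omega -> R) (X : Omega -> TX)
  (e : bool * bool -> TX -> R) :
  measurable_fun setT Z -> measurable_fun setT S1 -> measurable_fun setT S0 ->
  measurable_fun setT Y1 -> measurable_fun setT Y0 -> measurable_fun setT X ->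
  let U := fun w => (S1 w, S0 w) in
  let S := fun w => if Z w then S1 w else S0 w in
  (* Randomization: Z independent of (S(1), S(0), Y(1), Y(0), X) *)
  (forall (z : bool) (D : set (bool * bool * R * R * TX)), measurable D ->
     P (Z @^-1` [set z] `&` (fun w => (S1 w, S0 w, Y1 w, Y0 w, X w)) @^-1` D) =
     (P (Z @^-1` [set z]) * P ((fun w => (S1 w, S0 w, Y1 w, Y0 w, X w)) @^-1` D))%E) ->
  (* Monotonicity: S(1) >= S(0) almost surely *)
  P [set w | S1 w = false /\ S0 w = true] = 0%E ->
  (* General principal ignorability *)
  cond_indep P setT Y1 U X -> cond_indep P setT Y0 U X ->
  (* principal scores and positivity *)
  principal_scores P U X e ->
  (forall x, 0 < e ssbar x + e ss x) -> (forall x, 0 < e ssbar x + e sbarsbar x) ->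
  (0 < P (Z @^-1` [set true] `&` S @^-1` [set true]))%E ->
  (0 < P (Z @^-1` [set false] `&` S @^-1` [set false]))%E ->
  (forall u, u = ssbar \/ u = ss ->
     cond_indep P (Z @^-1` [set true] `&` S @^-1` [set true]) Y1 U
       (fun w => e1 e u (X w))) /\
  (forall u, u = ssbar \/ u = sbarsbar ->
     cond_indep P (Z @^-1` [set false] `&` S @^-1` [set false]) Y0 U
       (fun w => e0 e u (X w))).
Proof.
move=> mZ mS1 mS0 mY1 mY0 mX U S RAND _ CI1 CI0 PS pos1 pos0 _ _.
have mpreB (f : Omega -> bool) (c : bool) : measurable_fun setT f -> measurable (f @^-1` [set c]).
  by move=> mf; rewrite -[X in measurable X]setTI; exact: mf.
have mU u : measurable (U @^-1` [set u]).
  rewrite (_ : U @^-1` [set u] = S1 @^-1` [set u.1] `&` S0 @^-1` [set u.2]).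
    by apply: measurableI; apply: mpreB.
  apply/seteqP; split => w /=; rewrite /U; first by move=> <-.
  by case: u => ? ? /= [<- <-].
pose V := fun w => (S1 w, S0 w, Y1 w, Y0 w, X w).
have mcomp (K : measurableType _) (f : bool * bool * R * R * TX -> K) (F : set K) :
    measurable_fun setT f -> measurable F -> measurable (f @^-1` F).
  by move=> mf mF; rewrite -[X in measurable X]setTI; exact: mf.
have m111 : measurable_fun setT (fun t : bool * bool * R * R * TX => t.1.1.1).
  by apply: measurableT_comp; [exact: measurable_fst|apply: measurableT_comp; exact: measurable_fst].
split.
- move=> u hu; apply: (@main _ _ _ _ _ P Z U Y1 X e true ssbar ss) => //.
  + exact: mpreB.
  + move=> u' B E mB mE.
    pose D := (fun t : bool * bool * R * R * TX => t.1.1.2) @^-1` B `&`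
      (fun t : bool * bool * R * R * TX => t.1.1.1) @^-1` [set u'] `&` snd @^-1` E.
    have mD : measurable D.
      apply: measurableI; [apply: measurableI|].
      * apply: mcomp => //; apply: measurableT_comp; first exact: measurable_snd.
        by apply: measurableT_comp; exact: measurable_fst.
      * by apply: mcomp => //; exact: mbool2.
      * by apply: mcomp => //; exact: measurable_snd.
    exact: (RAND true D mD).
  + move=> w hw; rewrite /S; split; first by case.
    move=> Zw; split => //=; rewrite Zw; rewrite /U in hw.
    by case: hw => h; case: h => -> _.
  + move=> w [/= Zw Sw]; change ((if Z w then S1 w else S0 w) = true) in Sw.
    rewrite Zw in Sw; rewrite /U Sw /ssbar /ss.
    by case: (S0 w); [right|left].
- move=> u hu; apply: (@main _ _ _ _ _ P Z U Y0 X e false ssbar sbarsbar) => //.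
  + exact: mpreB.
  + move=> u' B E mB mE.
    pose D := (fun t : bool * bool * R * R * TX => t.1.2) @^-1` B `&`
      (fun t : bool * bool * R * R * TX => t.1.1.1) @^-1` [set u'] `&` snd @^-1` E.
    have mD : measurable D.
      apply: measurableI; [apply: measurableI|].
      * apply: mcomp => //; apply: measurableT_comp; first exact: measurable_snd.
        exact: measurable_fst.
      * by apply: mcomp => //; exact: mbool2.
      * by apply: mcomp => //; exact: measurable_snd.
    exact: (RAND false D mD).
  + move=> w hw; rewrite /S; split; first by case.
    move=> Zw; split => //=; rewrite Zw; rewrite /U in hw.
    by case: hw => h; case: h => _ ->.
  + move=> w [/= Zw Sw]; change ((if Z w then S1 w else S0 w) = false) in Sw.
    rewrite Zw in Sw; rewrite /U Sw /ssbar /sbarsbar.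
    by case: (S1 w); [left|right].
Qed.
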